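(* Let $\mathbb{R}^n$ and $\mathbb{R}^m$ be endowed with arbitrary norms (both denoted $\|\cdot\|$) and let $A\in\mathbb{R}^{m\times n}$ have at least two different columns. Then \[ \max_{w\in\mathbb{R}^n\setminus\{0\},\ \langle\mathbf{1},w\rangle=0}\frac{\|Aw\|}{\|w\|}=\max_{u\in\mathrm{conv}(A),\ x\in\Delta_{n-1}\setminus Z(u)}\frac{\|Ax-u\|}{\mathrm{dist}(x,Z(u))}, \] and \[ \frac{\Phi(A)}{\max_{i=1,\dots,n}\|e_i\|}\le\min_{u\in\mathrm{conv}(A),\ x\in\Delta_{n-1}\setminus Z(u)}\frac{2\|Ax-u\|}{\mathrm{dist}(x,Z(u))}. \]
   Context: $\mathbf{1}$ is the all-ones vector and $e_i$ the standard basis vectors of $\mathbb{R}^n$. $\Delta_{n-1}=\{x\in\mathbb{R}^n_+:\sum_ix_i=1\}$; $A$ is identified with the set of its columns; $\mathrm{conv}(A)=\{Ax:x\in\Delta_{n-1}\}$; for $u\in\mathrm{conv}(A)$, $Z(u)=\{z\in\Delta_{n-1}:Az=u\}$ and $\mathrm{dist}(x,Z(u))=\min_{z\in Z(u)}\|x-z\|$ (norm of $\mathbb{R}^n$). The facial distance is $\Phi(A)=\min\{\mathrm{dist}(F,\mathrm{conv}(A\setminus F)):F\text{ a face of }\mathrm{conv}(A),\ \emptyset\ne F\ne\mathrm{conv}(A)\}$, with $A\setminus F$ the columns of $A$ not in $F$ and $\mathrm{dist}(F,G)=\inf_{u\in F,w\in G}\|u-w\|$ (norm of $\mathbb{R}^m$).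 *)

(* Defs.v *)
From HB Require Import structures.
From mathcomp Require Import all_boot all_order all_algebra.
From mathcomp Require Import boolp classical_sets reals.
Set Implicit Arguments. Unset Strict Implicit. Unset Printing Implicit Defensive.
Import Order.TTheory GRing.Theory Num.Theory.
Local Open Scope ring_scope.
Local Open Scope classical_set_scope.

Section Defs.
Variable R : realType.

Definition is_norm (k : nat) (N : 'cV[R]_k -> R) : Prop :=
  [/\ forall x, N x = 0 -> x = 0,
      forall (a : R) x, N (a *: x) = `|a| * N x
    & forall x y, N (x + y) <= N x + N y].

Definition is_max (S : set R) (M : R) : Prop :=
  S M /\ forall s, S s -> s <= M.

Definition simplex (n : nat) : set 'cV[R]_n :=
  [set x | (forall i, 0 <= x i 0) /\ \sum_i x i 0 = 1].

Definition convA (m n : nat) (A : 'M[R]_(m, n)) : set 'cV[R]_m :=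
  [set A *m x | x in @simplex n].

Definition Zset (m n : nat) (A : 'M[R]_(m, n)) (u : 'cV[R]_m) : set 'cV[R]_n :=
  [set z | @simplex n z /\ A *m z = u].

Definition dist_pt (k : nat) (N : 'cV[R]_k -> R) (x : 'cV[R]_k)
  (S : set 'cV[R]_k) : R := inf [set N (x - z) | z in S].

Definition dist_set (k : nat) (N : 'cV[R]_k -> R) (F G : set 'cV[R]_k) : R :=
  inf [set N (u - w) | u in F & w in G].

Definition convex_set (k : nat) (C : set 'cV[R]_k) : Prop :=
  forall y z (t : R), C y -> C z -> 0 <= t <= 1 -> C (t *: y + (1 - t) *: z).

Definition is_face (k : nat) (C F : set 'cV[R]_k) : Prop :=
  [/\ F `<=` C, convex_set F &
      forall y z (t : R), C y -> C z -> 0 < t < 1 ->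
        F (t *: y + (1 - t) *: z) -> F y /\ F z].

Definition conv_outside (m n : nat) (A : 'M[R]_(m, n)) (F : set 'cV[R]_m)
  : set 'cV[R]_m :=
  [set A *m x | x in [set x | @simplex n x /\ forall i, F (col i A) -> x i 0 = 0]].

(* facial distance Phi(A) (a min over the finitely many proper nonempty faces) *)
Definition facial_distance (m n : nat) (Nm : 'cV[R]_m -> R) (A : 'M[R]_(m, n)) : R :=
  inf [set dist_set Nm F (conv_outside A F) |
        F in [set F | is_face (convA A) F /\ F !=set0 /\ F <> convA A]].

End Defs.
Arguments simplex {R} n _.

(* Main.v *)
Require Import Defs.
From HB Require Import structures.
From mathcomp Require Import all_boot all_order all_algebra.
From mathcomp Require Import boolp classical_sets reals.
From mathcomp Require Import topology normedtype derive.
From mathcomp Require Import ring lra.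
Import Order.TTheory GRing.Theory Num.Theory.
Import numFieldTopology.Exports numFieldNormedType.Exports.
Local Open Scope ring_scope.
Local Open Scope classical_set_scope.
Set Implicit Arguments. Unset Strict Implicit. Unset Printing Implicit Defensive.


Section Aux.
Variable R : realType.

Lemma nrm0 k (N : 'cV[R]_k -> R) : is_norm N -> N 0 = 0.
Proof. by case=> _ hZ _; rewrite -(scale0r (0 : 'cV[R]_k)) hZ normr0 mul0r. Qed.

Lemma nrmN k (N : 'cV[R]_k -> R) x : is_norm N -> N (- x) = N x.
Proof. by case=> _ hZ _; rewrite -scaleN1r hZ normrN1 mul1r. Qed.

Lemma nrm_ge0 k (N : 'cV[R]_k -> R) x : is_norm N -> 0 <= N x.
Proof.
move=> hN; have := hN; case=> _ _ hT.
have := hT x (- x); rewrite subrr nrm0 // nrmN //; lra.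
Qed.

Lemma nrm_gt0 k (N : 'cV[R]_k -> R) x : is_norm N -> x != 0 -> 0 < N x.
Proof.
move=> hN nx; rewrite lt_neqAle nrm_ge0 // andbT eq_sym.
by apply/eqP; case: hN => h0 _ _ /h0 /eqP; rewrite (negbTE nx).
Qed.

Lemma nrmB k (N : 'cV[R]_k -> R) x y : is_norm N -> N (x - y) = N (y - x).
Proof. by move=> hN; rewrite -opprB nrmN. Qed.

Lemma nrm_sum k (N : 'cV[R]_k -> R) I (r : seq I) (P : pred I) F : is_norm N ->
  N (\sum_(i <- r | P i) F i) <= \sum_(i <- r | P i) N (F i).
Proof.
move=> hN; elim/big_rec2 : _ => [|i y1 y2 _ H]; first by rewrite nrm0.
by case: hN => _ _ hT; apply: le_trans (hT _ _) _; rewrite lerD2l.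
Qed.

Lemma cV_decomp k (x : 'cV[R]_k) : x = \sum_j x j 0 *: delta_mx j 0.
Proof.
rewrite {1}(matrix_sum_delta x); apply: eq_bigr => j _.
by rewrite big_ord1.
Qed.

Lemma nrm_mul_le m k (N : 'cV[R]_m -> R) (A : 'M[R]_(m, k)) x : is_norm N ->
  N (A *m x) <= \sum_j `|x j 0| * N (A *m delta_mx j 0).
Proof.
move=> hN; rewrite {1}(cV_decomp x) mulmx_sumr.
apply: le_trans (nrm_sum _ _ _ hN) _; apply: ler_sum => j _.
by case: hN => _ hZ _; rewrite -scalemxAr hZ.
Qed.

Lemma entry_le_norm a b (x : 'M[R]_(a, b)) i j : `|x i j| <= `|x|.
Proof.
rewrite [leRHS]/Num.norm /= mx_normrE.
exact: (@le_bigmax _ _ _ 0 (fun ij : 'I_a * 'I_b => `|x ij.1 ij.2|) (i, j)).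
Qed.

Lemma lip_cont a b (V : normedModType R) (f : 'M[R]_(a, b) -> V) k :
  (forall x y, `|f x - f y| <= k * `|x - y|) -> continuous f.
Proof.
move=> H x; have FF : ProperFilter (nbhs x) := nbhs_pfilter x.
apply/(cvgrPdist_lt (F := nbhs x)) => e e0.
have k1 : 0 < `|k| + 1 by rewrite ltr_wpDl.
near=> y.
apply: le_lt_trans (H x y) _.
have : `|x - y| < e / (`|k| + 1).
  near: y; apply: (@cvgr_dist_lt _ _ _ (nbhs x) _ id x cvg_id).
  by rewrite divr_gt0.
move=> hxy.
apply: (le_lt_trans (ler_wpM2r (normr_ge0 _) (ler_norm k))).
apply: (le_lt_trans (ler_wpM2r (normr_ge0 _) (_ : `|k| <= `|k| + 1))); first lra.
by rewrite mulrC -ltr_pdivlMr.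
Unshelve. all: by end_near.
Qed.


Lemma dist_le_aux (a b c : R) : a <= c + b -> b <= c + a -> `|a - b| <= c.
Proof. by move=> h1 h2; rewrite ler_norml; apply/andP; split; lra. Qed.

Lemma cont_nrmA m k (N : 'cV[R]_m -> R) (A : 'M[R]_(m, k)) : is_norm N ->
  continuous (fun x : 'cV[R]_k => N (A *m x)).
Proof.
move=> hN; apply: (@lip_cont _ _ _ _ (\sum_j N (A *m delta_mx j 0))) => x y.
have H1 : N (A *m (x - y)) <= `|x - y| * \sum_j N (A *m delta_mx j 0).
  apply: le_trans (nrm_mul_le _ _ hN) _; rewrite mulr_sumr; apply: ler_sum => j _.
  by apply: ler_wpM2r; [exact: nrm_ge0 | exact: entry_le_norm].
rewrite mulrC; apply: dist_le_aux.
  have -> : A *m x = A *m (x - y) + A *m y by rewrite -mulmxDr subrK.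
  by case: (hN) => _ _ hT; apply: le_trans (hT _ _) _; rewrite lerD2r.
have -> : A *m y = - (A *m (x - y)) + A *m x by rewrite -mulmxN -mulmxDr opprB subrK.
case: (hN) => _ _ hT; apply: le_trans (hT _ _) _; rewrite nrmN // lerD2r.
done.
Qed.

Lemma cont_lin k (c : 'I_k -> R) : continuous (fun x : 'cV[R]_k => \sum_j c j * x j 0).
Proof.
apply: (@lip_cont _ _ _ _ (\sum_j `|c j|)) => x y.
rewrite -sumrB mulr_suml; apply: le_trans (ler_norm_sum _ _ _) _.
apply: ler_sum => j _; rewrite -mulrBr normrM ler_wpM2l //.
by have := entry_le_norm (x - y) j 0; rewrite !mxE.
Qed.

Lemma cont_l1 k (x0 : 'cV[R]_k) : continuous (fun z : 'cV[R]_k => \sum_j `|x0 j 0 - z j 0|).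
Proof.
apply: (@lip_cont _ _ _ _ (\sum_(j < k) 1)) => x y.
rewrite -sumrB mulr_suml; apply: le_trans (ler_norm_sum _ _ _) _.
apply: ler_sum => j _; rewrite mul1r.
apply: le_trans (ler_dist_dist _ _) _.
have -> : x0 j 0 - x j 0 - (x0 j 0 - y j 0) = - (x - y) j 0 by rewrite !mxE; ring.
by rewrite normrN entry_le_norm.
Qed.

Lemma tr_norm a b (M : 'M[R]_(a, b)) : `|M^T| <= `|M|.
Proof.
rewrite [leLHS]/Num.norm /= mx_normrE; apply: bigmax_le => // ij _.
by rewrite mxE entry_le_norm.
Qed.

Lemma cont_tr a b : continuous (fun M : 'M[R]_(a, b) => M^T).
Proof.
by apply: (@lip_cont _ _ _ _ 1) => x y; rewrite mul1r -linearB tr_norm.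
Qed.

Lemma compact_cV k (S : set 'cV[R]_k) B : closed S ->
  (forall x, S x -> forall i, `|x i 0| <= B) -> compact S.
Proof.
move=> cS bS.
pose S' := [set v : 'rV[R]_k | S v^T].
have cS' : closed S'.
  by apply: (@preimage_closed _ _ (fun v : 'rV[R]_k => v^T)) => // v _; exact: cont_tr.
have kS' : compact S'.
  have Mnco := @rV_compact R k (fun=> `[(- B), B]%classic) (fun _ => @segment_compact R _ _).
  apply: subclosed_compact cS' Mnco _ => v Sv i /=; have := bS _ Sv i; rewrite mxE.
  by rewrite in_itv /= -ler_norml.
have -> : S = (fun v : 'rV[R]_k => v^T) @` S'.
  apply/seteqP; split => [x Sx|_ [v Sv <-] //].
  by exists x^T; rewrite /S' /= trmxK.
apply: continuous_compact => //; apply: continuous_subspaceT => v; exact: cont_tr.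
Qed.

End Aux.


Section P1.
Variables (R : realType) (m n : nat) (Nn : 'cV[R]_n -> R) (Nm : 'cV[R]_m -> R).
Hypotheses (hNn : is_norm Nn) (hNm : is_norm Nm).
Variable A : 'M[R]_(m, n).

Definition ratio (w : 'cV[R]_n) := Nm (A *m w) / Nn w.
Definition sum0 k (w : 'cV[R]_k) := \sum_i w i 0.

Lemma sum0Z k c (w : 'cV[R]_k) : sum0 (c *: w) = c * sum0 w.
Proof. by rewrite /sum0 mulr_sumr; apply: eq_bigr => i _; rewrite mxE. Qed.

Lemma sum0D k (w v : 'cV[R]_k) : sum0 (w + v) = sum0 w + sum0 v.
Proof. by rewrite /sum0 -big_split; apply: eq_bigr => i _; rewrite mxE. Qed.

Lemma sum0N k (w : 'cV[R]_k) : sum0 (- w) = - sum0 w.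
Proof. by rewrite -scaleN1r sum0Z mulN1r. Qed.

Lemma sum0B k (w v : 'cV[R]_k) : sum0 (w - v) = sum0 w - sum0 v.
Proof. by rewrite sum0D sum0N. Qed.

Lemma sum0_delta k (i : 'I_k) : sum0 (delta_mx i 0 : 'cV[R]_k) = 1.
Proof.
rewrite /sum0 (bigD1 i) //= big1 => [|j /negbTE hj]; first by rewrite !mxE !eqxx addr0.
by rewrite mxE hj.
Qed.

Lemma ratioZ c w : c != 0 -> ratio (c *: w) = ratio w.
Proof.
move=> c0; rewrite /ratio -scalemxAr.
case: (hNm) => _ hZm _; case: (hNn) => _ hZn _.
rewrite hZm hZn invfM mulrACA divff ?mul1r //.
by rewrite normr_eq0.
Qed.

Lemma cont_Nn : continuous Nn.
Proof.
have -> : Nn = (fun x => Nn (1%:M *m x)) by apply: funext => x; rewrite mul1mx.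
exact: cont_nrmA.
Qed.

Lemma cont_sum0 k : continuous (@sum0 k).
Proof.
have -> : @sum0 k = (fun x => \sum_j 1 * x j 0).
  by apply: funext => x; rewrite /sum0; apply: eq_bigr => j _; rewrite mul1r.
exact: cont_lin.
Qed.

Hypothesis hA : exists i j : 'I_n, col i A != col j A.

Lemma exists_max : exists w, [/\ sum0 w = 0, `|w| = 1, w != 0 &
  forall v, sum0 v = 0 -> v != 0 -> ratio v <= ratio w].
Proof.
have [i [j hij]] := hA.
pose w0 : 'cV[R]_n := delta_mx i 0 - delta_mx j 0.
have w00 : w0 != 0.
  apply: contra hij => /eqP h0; rewrite !colE; apply/eqP; congr (_ *m _).
  by apply/eqP; rewrite -subr_eq0; apply/eqP.
pose K1 := [set w : 'cV[R]_n | sum0 w = 0 /\ `|w| = 1].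
have K1n : K1 !=set0.
  exists (`|w0|^-1 *: w0); split; last exact: normfZV.
  by rewrite sum0Z sum0B !sum0_delta subrr mulr0.
have K1c : compact K1.
  apply: (@compact_cV _ _ _ 1).
    have -> : K1 = (@sum0 n) @^-1` [set 0] `&` (fun w : 'cV[R]_n => `|w|) @^-1` [set 1].
      by apply/seteqP; split => w [h1 h2].
    apply: closedI; apply: preimage_closed.
    - by move=> w _; exact: cont_sum0.
    - exact: closed_eq.
    - by move=> w _; exact: norm_continuous.
    - exact: closed_eq.
  by move=> x [_ hx] k; rewrite -hx entry_le_norm.
have Kcont : {within K1, continuous ratio}.
  apply: continuous_in_subspaceT => w; rewrite inE => -[_ hw].
  have wn0 : w != 0 by apply/eqP => h; move: hw; rewrite h normr0 => /esym/eqP; rewrite oner_eq0.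
  apply: cvgM; first exact: (nbhs_filter w).
  have H := @cont_nrmA _ _ _ _ A hNm w. exact H.
  apply: cvgV; last by have H := @cont_Nn w; exact H.
  - exact: (nbhs_filter w).
  - by rewrite gt_eqF // nrm_gt0.
have [c cK cmax] := compact_EVT_max K1n K1c Kcont.
move: cK; rewrite inE => -[c1 c2].
have cn0 : c != 0 by apply/eqP => h; move: c2; rewrite h normr0 => /esym/eqP; rewrite oner_eq0.
exists c; split => // v v1 v2.
rewrite -(ratioZ v (_ : `|v|^-1 != 0)); last by rewrite invr_eq0 normr_eq0.
apply: cmax; rewrite inE; split; last exact: normfZV.
by rewrite sum0Z v1 mulr0.
Qed.


Lemma Zne u : convA A u -> Zset A u !=set0.
Proof. by case=> y hy <-; exists y. Qed.

Lemma dist_ge0 u x : convA A u -> 0 <= dist_pt Nn x (Zset A u).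
Proof.
move=> hu; apply: lb_le_inf.
  by have [z hz] := Zne hu; exists (Nn (x - z)); exists z.
by move=> _ [z _ <-]; exact: nrm_ge0.
Qed.

Lemma dist_le u x z : Zset A u z -> dist_pt Nn x (Zset A u) <= Nn (x - z).
Proof.
move=> hz; apply: ge_inf; last by exists z.
by exists 0 => _ [y _ <-]; exact: nrm_ge0.
Qed.

Variable ws : 'cV[R]_n.
Hypotheses (hws0 : sum0 ws = 0) (hws1 : `|ws| = 1) (hwsn : ws != 0)
  (hwsmax : forall v, sum0 v = 0 -> v != 0 -> ratio v <= ratio ws).

Lemma M_bound w : sum0 w = 0 -> Nm (A *m w) <= ratio ws * Nn w.
Proof.
move=> hw; have [->|wn0] := eqVneq w 0.
  by rewrite mulmx0 !nrm0 // mulr0.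
by rewrite -ler_pdivrMr ?nrm_gt0 //; exact: hwsmax.
Qed.

Lemma M_gt0 : 0 < ratio ws.
Proof.
have [i [j hij]] := hA.
pose w0 : 'cV[R]_n := delta_mx i 0 - delta_mx j 0.
have Aw0 : A *m w0 != 0 by rewrite mulmxBr -!colE subr_eq0.
have w00 : w0 != 0 by apply: contra Aw0 => /eqP ->; rewrite mulmx0.
apply: lt_le_trans (hwsmax _ w00).
  by rewrite /ratio divr_gt0 // nrm_gt0.
by rewrite sum0B !sum0_delta subrr.
Qed.

Lemma sum0_simplex (z : 'cV[R]_n) : simplex n z -> sum0 z = 1.
Proof. by case. Qed.

Lemma dist_lb u x : convA A u -> simplex n x ->
  Nm (A *m x - u) <= ratio ws * dist_pt Nn x (Zset A u).
Proof.
move=> hu hx; rewrite mulrC -ler_pdivrMr ?M_gt0 //.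
apply: lb_le_inf.
  by have [z hz] := Zne hu; exists (Nn (x - z)); exists z.
move=> _ [z [hz1 hz2] <-].
rewrite ler_pdivrMr ?M_gt0 // mulrC -hz2 -mulmxBr.
by apply: M_bound; rewrite sum0B !sum0_simplex // subrr.
Qed.


Lemma set2_ub u x : convA A u -> simplex n x ->
  Nm (A *m x - u) / dist_pt Nn x (Zset A u) <= ratio ws.
Proof.
move=> hu hx; have := dist_ge0 x hu; rewrite le_eqVlt => /orP[/eqP <-|dp].
  by rewrite invr0 mulr0 ltW // M_gt0.
by rewrite ler_pdivrMr // dist_lb.
Qed.

Lemma part1 :
  is_max [set Nm (A *m w) / Nn w |
              w in [set w : 'cV[R]_n | w != 0 /\ \sum_i w i 0 = 0]] (ratio ws) /\
  is_max [set Nm (A *m p.2 - p.1) / dist_pt Nn p.2 (Zset A p.1) |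
              p in [set p : 'cV[R]_m * 'cV[R]_n |
                     convA A p.1 /\ simplex n p.2 /\ ~ Zset A p.1 p.2]] (ratio ws).
Proof.
split.
  split; first by exists ws.
  by move=> _ [w [w1 w2] <-]; exact: hwsmax.
split; last by move=> _ [[u x] [hu [hx _]] <-]; exact: set2_ub.
have [i _] := hA.
have n0 : (0 < n)%N := leq_ltn_trans (leq0n i) (ltn_ord i).
have nR : (n%:R : R) != 0 by rewrite pnatr_eq0 -lt0n.
have nRi : 0 < (n%:R : R)^-1 by rewrite invr_gt0 ltr0n.
pose c0 : 'cV[R]_n := const_mx (n%:R^-1).
pose xs := c0 + n%:R^-1 *: ws.
pose us := A *m c0.
have hc0 : simplex n c0.
  split; first by move=> k; rewrite mxE ltW.
  under eq_bigr do rewrite mxE.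
  by rewrite sumr_const card_ord -[_ *+ n]mulr_natr mulVf.
have hus : convA A us by exists c0.
have hxs : simplex n xs.
  split.
    move=> k; rewrite !mxE.
    have := entry_le_norm ws k 0; rewrite hws1 ler_norml => /andP[h1 _].
    rewrite -[X in 0 <= X + _]mulr1 -mulrDr; apply: mulr_ge0; first exact: ltW.
    by rewrite addrC -lerBlDr sub0r.
  by have := sum0D c0 (n%:R^-1 *: ws); rewrite sum0Z hws0 mulr0 addr0 /sum0 => ->; case: hc0.
have e1 : A *m xs - us = n%:R^-1 *: (A *m ws).
  by rewrite /xs mulmxDr scalemxAr addrC addKr.
have e2 : xs - c0 = n%:R^-1 *: ws by rewrite /xs addrC addKr.
have Nws : 0 < Nn ws by exact: nrm_gt0.
have e3 : Nm (A *m ws) = ratio ws * Nn ws by rewrite /ratio divfK // gt_eqF.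
have Mp := M_gt0.
have e4 : Nm (A *m xs - us) = n%:R^-1 * (ratio ws * Nn ws).
  by rewrite e1; case: (hNm) => _ hZ _; rewrite hZ ger0_norm ?e3 // ltW.
have D1 : dist_pt Nn xs (Zset A us) <= n%:R^-1 * Nn ws.
  apply: le_trans (dist_le _ (_ : Zset A us c0)) _; first by [].
  by rewrite e2; case: (hNn) => _ hZ _; rewrite hZ ger0_norm // ltW.
have D2 := dist_lb hus hxs.
have Dp : 0 < dist_pt Nn xs (Zset A us).
  rewrite lt_neqAle dist_ge0 // andbT; apply/eqP => D0.
  move: D2; rewrite -D0 mulr0 e4 leNgt => /negP; apply.
  by apply: mulr_gt0 => //; apply: mulr_gt0.
exists (us, xs) => /=.
  split => //; split => //; case=> _ hA2.
  by move: e4; rewrite hA2 subrr nrm0 // => /esym/eqP; rewrite mulf_eq0 (gt_eqF nRi) /= (gt_eqF (mulr_gt0 Mp Nws)).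
apply/le_anti; apply/andP; split; first exact: set2_ub.
rewrite ler_pdivlMr // e4.
by rewrite mulrCA ler_wpM2l // ltW.
Qed.

End P1.


Section Face.
Variables (R : realType) (m n : nat) (A : 'M[R]_(m, n)).

Lemma simplex_comb (a b c : R) (x1 x2 x3 : 'cV[R]_n) :
  simplex n x1 -> simplex n x2 -> simplex n x3 -> 0 <= a -> 0 <= b -> 0 <= c ->
  a + b + c = 1 -> simplex n (a *: x1 + b *: x2 + c *: x3).
Proof.
move=> [p1 s1] [p2 s2] [p3 s3] a0 b0 c0 abc; split.
  by move=> i; rewrite !mxE !addr_ge0 ?mulr_ge0.
change (sum0 (a *: x1 + b *: x2 + c *: x3) = 1); rewrite !sum0D !sum0Z.
by rewrite (_ : sum0 x1 = 1) // (_ : sum0 x2 = 1) // (_ : sum0 x3 = 1) // !mulr1.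
Qed.

Lemma convA_comb (a b c : R) y1 y2 y3 :
  convA A y1 -> convA A y2 -> convA A y3 -> 0 <= a -> 0 <= b -> 0 <= c ->
  a + b + c = 1 -> convA A (a *: y1 + b *: y2 + c *: y3).
Proof.
move=> [x1 h1 <-] [x2 h2 <-] [x3 h3 <-] a0 b0 c0 abc.
exists (a *: x1 + b *: x2 + c *: x3); first exact: simplex_comb.
by rewrite !mulmxDr !scalemxAr.
Qed.

Definition Gf (v : 'cV[R]_m) :=
  [set y | convA A y /\ exists2 e, 0 < e & convA A (v + e *: (v - y))].

Lemma Gf_ext1 v y z t : convA A v -> convA A y -> convA A z -> 0 < t < 1 ->
  Gf v (t *: y + (1 - t) *: z) -> Gf v y.
Proof.
move=> hv hy hz /andP[t0 t1] [_ [e e0 he]]; split => //.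
have e1p : 0 < 1 + e by rewrite addr_gt0.
exists (t * e / (1 + e)); first by rewrite divr_gt0 ?mulr_gt0.
have e1 : 1 + e != 0 by rewrite gt_eqF.
have := convA_comb (a := 1 / (1 + e)) (b := e * (1 - t) / (1 + e)) (c := t * e / (1 + e)) he hz hv.
have -> : 1 / (1 + e) *: (v + e *: (v - (t *: y + (1 - t) *: z))) +
   e * (1 - t) / (1 + e) *: z + t * e / (1 + e) *: v = v + t * e / (1 + e) *: (v - y).
  by apply/matrixP => i j; rewrite !mxE; field.
apply.
- by rewrite divr_ge0 // ltW.
- by rewrite divr_ge0 ?mulr_ge0 // ?subr_ge0 ltW.
- by rewrite divr_ge0 ?mulr_ge0 // ltW.
- by field.
Qed.

Lemma Gf_face v : convA A v -> is_face (convA A) (Gf v).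
Proof.
move=> hv; split.
- by move=> y [].
- move=> y z t [hy [e1 e10 he1]] [hz [e2 e20 he2]] /andP[t0 t1]; split.
    have := convA_comb (a := t) (b := 1 - t) (c := 0) hy hz hy.
    by rewrite scale0r !addr0; apply => //; rewrite ?subr_ge0 // addrC subrK.
  have e12 : 0 < e1 + e2 by rewrite addr_gt0.
  exists (e1 * e2 / (e1 + e2)); first by rewrite divr_gt0 ?mulr_gt0.
  have := convA_comb (a := t * e2 / (e1 + e2)) (b := (1 - t) * e1 / (e1 + e2))
    (c := (t * e1 + (1 - t) * e2) / (e1 + e2)) he1 he2 hv.
  have -> : t * e2 / (e1 + e2) *: (v + e1 *: (v - y)) + (1 - t) * e1 / (e1 + e2) *: (v + e2 *: (v - z))
     + (t * e1 + (1 - t) * e2) / (e1 + e2) *: v = v + e1 * e2 / (e1 + e2) *: (v - (t *: y + (1 - t) *: z)).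
    apply/matrixP => i j; rewrite !mxE; field; exact: lt0r_neq0.
  have t1' : 0 <= 1 - t by rewrite subr_ge0.
  apply.
  + by rewrite divr_ge0 ?mulr_ge0 // ?ltW.
  + by rewrite divr_ge0 ?mulr_ge0 // ?ltW.
  + by rewrite divr_ge0 ?addr_ge0 ?mulr_ge0 // ?ltW.
  + by field; exact: lt0r_neq0.
- move=> y z t hy hz /andP[t0 t1] hG; split; first by apply: (Gf_ext1 hv hy hz _ hG); rewrite t0 t1.
  apply: (Gf_ext1 (t := 1 - t) hv hz hy).
    by rewrite subr_gt0 t1 /= ltrBlDr ltrDl.
  suff -> : (1 - t) *: z + (1 - (1 - t)) *: y = t *: y + (1 - t) *: z by [].
  by apply/matrixP => i j; rewrite !mxE; ring.
Qed.

End Face.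

Lemma per_j (R : realType) (a T y F : R) : 0 <= y -> 0 <= T -> (a < 0 -> T <= - a) -> (0 <= a -> T = 0) ->
  0 <= F -> (F = 0 \/ F <= a) -> `|a + T - y - F| <= `|a| - T - F + y.
Proof.
move=> y0 T0 h1 h2 F0 h3; case: (ltrP a 0) => ha.
  have hT := h1 ha; have hF : F = 0 by case: h3 => // h; lra.
  rewrite hF (ltr0_norm ha) ler_norml; apply/andP; split; lra.
have hT := h2 ha; rewrite hT (ger0_norm ha) ler_norml; apply/andP; case: h3 => h; split; lra.
Qed.

Lemma final_ineq (R : realType) (P N D E s : R) : 0 < D -> 0 < E -> 0 < s -> 0 <= N -> P <= N ->
  D <= E * (2 * s) -> P / E <= 2 * (s * N) / D.
Proof.
move=> D0 E0 s0 N0 PN DE.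
case: (lerP P 0) => P0.
  apply: (@le_trans _ _ 0); first by rewrite pmulr_lle0 // invr_gt0.
  by rewrite divr_ge0 ?mulr_ge0 // ltW.
rewrite ler_pdivrMr // mulrAC ler_pdivlMr //.
have h1 : P * D <= P * (E * (2 * s)) by rewrite ler_pM2l.
have h2 : P * (E * (2 * s)) <= N * (E * (2 * s)) by rewrite ler_pM2r // mulr_gt0 // mulr_gt0.
apply: le_trans h1 _; apply: le_trans h2 _.
by rewrite le_eqVlt; apply/orP; left; apply/eqP; ring.
Qed.

Lemma inf_ge0 (R : realType) (S : set R) : (forall y, S y -> 0 <= y) -> 0 <= inf S.
Proof.
move=> h; case: (pselect (S !=set0)) => [ne|e].
  exact: lb_le_inf.
have -> : S = set0 by apply/seteqP; split => // y Sy; apply: e; exists y.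
by rewrite inf0.
Qed.

Lemma entry_le_sum (R : realType) k (z : 'cV[R]_k) i : (forall j, 0 <= z j 0) -> z i 0 <= \sum_j z j 0.
Proof. by move=> h; rewrite (bigD1 i) //= lerDl sumr_ge0. Qed.

Lemma simplex_delta (R : realType) k (i : 'I_k) : simplex k (delta_mx i 0 : 'cV[R]_k).
Proof. by split; [move=> j; rewrite mxE ler0n | exact: sum0_delta]. Qed.

Lemma mpm (R : realType) (a : R) : Num.max a 0 - Num.max (- a) 0 = a.
Proof.
case: (boolP (0 <= a)) => h.
  by rewrite (max_l h) max_r ?subr0 // oppr_le0.
rewrite -ltNge in h.
by rewrite (max_r (ltW h)) max_l ?sub0r ?opprK // oppr_ge0 ltW.
Qed.

Lemma mpp (R : realType) (a : R) : `|a| = Num.max a 0 + Num.max (- a) 0.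
Proof.
case: (boolP (0 <= a)) => h.
  by rewrite (max_l h) max_r ?addr0 ?ger0_norm // oppr_le0.
rewrite -ltNge in h.
by rewrite (max_r (ltW h)) max_l ?add0r ?ltr0_norm // oppr_ge0 ltW.
Qed.

Lemma nrm_le_l1 (R : realType) k (N : 'cV[R]_k -> R) x : is_norm N ->
  N x <= \sum_j `|x j 0| * N (delta_mx j 0).
Proof.
move=> hN; rewrite {1}(cV_decomp x); apply: le_trans (nrm_sum _ _ _ hN) _.
by apply: ler_sum => j _; case: hN => _ hZ _; rewrite hZ.
Qed.

Section P2.
Variables (R : realType) (m n : nat) (Nn : 'cV[R]_n -> R) (Nm : 'cV[R]_m -> R).
Hypotheses (hNn : is_norm Nn) (hNm : is_norm Nm).
Variable A : 'M[R]_(m, n).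
Hypothesis hA : exists i j : 'I_n, col i A != col j A.
Variable ws : 'cV[R]_n.
Hypothesis hwsmax : forall v, sum0 v = 0 -> v != 0 -> ratio Nn Nm A v <= ratio Nn Nm A ws.

Lemma Z_closed u : closed (Zset A u).
Proof.
have -> : Zset A u = \bigcap_(i in setT) [set z : 'cV[R]_n | 0 <= z i 0] `&`
   ((@sum0 R n) @^-1` [set 1] `&`
    \bigcap_(k in setT) [set z : 'cV[R]_n | \sum_j A k j * z j 0 = u k 0]).
  apply/seteqP; split.
    move=> z [[h1 h2] h3]; split; first by move=> i _; exact: h1.
    by split; [exact: h2 | move=> k _ /=; rewrite -h3 mxE].
  move=> z [h1 [h2 h3]]; split; first by split; [move=> i; exact: h1 | exact: h2].
  by apply/matrixP => k l; rewrite (ord1 l) mxE; exact: h3.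
apply: closedI; first apply: closed_bigI => i _.
  apply: (@preimage_closed _ _ (fun z : 'cV[R]_n => z i 0) [set r : R | 0 <= r]).
    by move=> z _; exact: coord_continuous.
  exact: closed_ge.
apply: closedI.
  apply: preimage_closed; last exact: closed_eq.
  by move=> z _; have H := @cont_sum0 R n z; exact H.
apply: closed_bigI => k _.
apply: (@preimage_closed _ _ (fun z : 'cV[R]_n => \sum_j A k j * z j 0) [set u k 0]).
  by move=> z _; have H := @cont_lin R n (fun j => A k j) z; exact H.
exact: closed_eq.
Qed.

Lemma Z_compact u : compact (Zset A u).
Proof.
apply: (@compact_cV R n (Zset A u) 1 (@Z_closed u)) => z [[h1 h2] _] i.
by rewrite ger0_norm // -h2 entry_le_sum.
Qed.


Lemma part2 u x : convA A u -> simplex n x -> ~ Zset A u x ->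
  facial_distance Nm A / \big[Num.max/0]_(i < n) Nn (delta_mx i 0)
       <= 2 * Nm (A *m x - u) / dist_pt Nn x (Zset A u).
Proof.
move=> hu hx hnZ.
have Axu : A *m x != u by apply/eqP => h; apply: hnZ; split.
have NAxu : 0 < Nm (A *m x - u) by rewrite nrm_gt0 // subr_eq0.
have Mp := M_gt0 hNn hNm hA hwsmax.
have DL := dist_lb hNn hNm hA hwsmax hu hx.
have Dp : 0 < dist_pt Nn x (Zset A u).
  rewrite lt_neqAle dist_ge0 // andbT; apply/eqP => D0.
  by move: DL; rewrite -D0 mulr0 leNgt NAxu.
have hcont : {within Zset A u, continuous (fun z : 'cV[R]_n => \sum_j `|x j 0 - z j 0|)}.
  by apply: continuous_subspaceT => w; have H := @cont_l1 R n x w; exact H.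
have [z zZ zmin] := compact_EVT_min (Zne hu) (@Z_compact u) hcont.
move: zZ; rewrite inE => zZ.
have [[zpos zsum] Azu] := zZ.
have [xpos xsum] := hx.
pose d := x - z.
pose dp := map_mx (fun a => Num.max a 0) d.
pose dm := map_mx (fun a => Num.max (- a) 0) d.
pose s := sum0 dp.
have dpE k : dp k 0 = Num.max (d k 0) 0 by rewrite mxE.
have dmE k : dm k 0 = Num.max (- d k 0) 0 by rewrite mxE.
have dE k : d k 0 = x k 0 - z k 0 by rewrite /d !mxE.
have dp0 k : 0 <= dp k 0 by rewrite dpE le_max lexx orbT.
have dm0 k : 0 <= dm k 0 by rewrite dmE le_max lexx orbT.
have hdd : d = dp - dm by apply/matrixP => k l; rewrite (ord1 l) !mxE mpm.
have sd : sum0 d = 0.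
  by rewrite /d sum0B (_ : sum0 x = 1) // (_ : sum0 z = 1) // subrr.
have sdm : sum0 dm = s by apply/eqP; rewrite eq_sym -subr_eq0 -sum0B -hdd sd.
have Ad : A *m d = A *m x - u by rewrite /d mulmxBr Azu.
have dn0 : d != 0 by apply: contra Axu => /eqP d0; rewrite -subr_eq0 -Ad d0 mulmx0.
have s0 : 0 <= s by rewrite /s /sum0 sumr_ge0.
have sp : 0 < s.
  rewrite lt_neqAle s0 andbT; apply: contra dn0 => /eqP s00.
  have h1 k : dp k 0 = 0.
    by apply: (psumr_eq0P (P := predT) (F := fun k => dp k 0)) => // ; rewrite s00.
  have h2 k : dm k 0 = 0.
    by apply: (psumr_eq0P (P := predT) (F := fun k => dm k 0)) => //; rewrite -/(sum0 dm) sdm s00.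
  rewrite hdd subr_eq0; apply/eqP/matrixP => k l; rewrite (ord1 l) h1 h2 //.
have [i hi] : exists i, 0 < dp i 0.
  case: (pselect (exists i, 0 < dp i 0)) => // hne; exfalso.
  have : s <= \sum_(k < n) (0 : R).
    rewrite /s /sum0; apply: ler_sum => k _.
    by rewrite leNgt; apply/negP => h; apply: hne; exists k.
  by rewrite big1_eq leNgt sp.
pose p := s^-1 *: dp.
pose q := s^-1 *: dm.
have sn0 : s != 0 by rewrite gt_eqF.
have hp : simplex n p.
  split; first by move=> k; rewrite mxE mulr_ge0 // invr_ge0.
  by have := sum0Z s^-1 dp; rewrite -/s mulVf // => <-.
have hq : simplex n q.
  split; first by move=> k; rewrite mxE mulr_ge0 // invr_ge0.
  by have := sum0Z s^-1 dm; rewrite sdm mulVf // => <-.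
pose v := A *m q.
have hv : convA A v by exists q.
have eAxu : A *m x - u = s *: (A *m p - A *m q).
  by rewrite -Ad hdd -!scalemxAr -scalerBr /p /q !scalerA mulfV // !scale1r mulmxBr.
have qE k : q k 0 = s^-1 * Num.max (- d k 0) 0 by rewrite mxE dmE.
have opt j : 0 < dp j 0 -> ~ Gf A v (col j A).
  move=> dj [_ [e e0 [y0 hy0 hAy0]]].
  have djp : 0 < d j 0.
    by move: dj; rewrite dpE; case: (boolP (0 <= d j 0)) => h; [rewrite max_l // lt_neqAle eq_sym => /andP[] | rewrite max_r ?ltxx // ltW // ltNge].
  have e1p : 0 < 1 + e by rewrite addr_gt0.
  pose dl := Num.min (s / (1 + e)) (d j 0 / e).
  have dl0 : 0 < dl by rewrite lt_min !divr_gt0.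
  have dl1 : dl * (1 + e) <= s.
    by rewrite -ler_pdivlMr // ge_min lexx.
  have dl2 : dl * e <= d j 0.
    by rewrite -ler_pdivlMr // ge_min lexx orbT.
  pose z' := z - (dl * (1 + e)) *: q + dl *: y0 + (dl * e) *: delta_mx j 0.
  have Az' : A *m z' = u.
    rewrite /z' !mulmxDr !mulmxN.
    rewrite -[A *m ((dl * (1 + e)) *: q)]scalemxAr -[A *m (dl *: y0)]scalemxAr.
    rewrite -[A *m ((dl * e) *: delta_mx j 0)]scalemxAr Azu hAy0 -colE -/v.
    by apply/matrixP => k l; rewrite !mxE; ring.
  have dl1' : dl * (1 + e) / s <= 1 by rewrite ler_pdivrMr // mul1r.
  have z'E k : z' k 0 = z k 0 - dl * (1 + e) * q k 0 + dl * y0 k 0 + dl * e * (delta_mx j 0 : 'cV[R]_n) k 0.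
    by rewrite /z' !mxE.
  have hy0p k : 0 <= y0 k 0 by case: hy0.
  have Tle k : dl * (1 + e) * q k 0 <= z k 0.
    rewrite qE mulrA; apply: (@le_trans _ _ (Num.max (- d k 0) 0)).
      by apply: ler_piMl; [rewrite le_max lexx orbT|].
    by rewrite ge_max zpos andbT dE opprB lerBlDr lerDl xpos.
  have hz' : simplex n z'.
    split.
      move=> k; rewrite z'E -addrA; apply: addr_ge0; last first.
        apply: addr_ge0; first by apply: mulr_ge0; [exact: ltW | exact: hy0p].
        by apply: mulr_ge0; [apply: mulr_ge0; exact: ltW | rewrite mxE ler0n].
      by rewrite subr_ge0 Tle.
    change (sum0 z' = 1).
    rewrite /z' !sum0D sum0N (sum0Z (dl * (1 + e)) q) (sum0Z dl y0) (sum0Z (dl * e)) sum0_delta.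
    rewrite (_ : sum0 z = 1) // (_ : sum0 q = 1) //; last by case: hq.
    rewrite (_ : sum0 y0 = 1); last by case: hy0.
    ring.
  have Zz' : Zset A u z' by [].
  have := zmin z'; rewrite inE => /(_ Zz'); apply/negP; rewrite -ltNge.
  have hk k : `|x k 0 - z' k 0| <= `|x k 0 - z k 0| - dl * (1 + e) * q k 0
      - dl * e * (delta_mx j 0 : 'cV[R]_n) k 0 + dl * y0 k 0.
    have -> : x k 0 - z' k 0 = (x k 0 - z k 0) + dl * (1 + e) * q k 0 - dl * y0 k 0
        - dl * e * (delta_mx j 0 : 'cV[R]_n) k 0 by rewrite z'E; ring.
    rewrite -dE; apply: per_j.
    - by apply: mulr_ge0; [exact: ltW | exact: hy0p].
    - by apply: mulr_ge0; [apply: mulr_ge0; [exact: ltW | exact: ltW] | case: hq].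
    - move=> ha; rewrite qE max_l; last by rewrite oppr_ge0 ltW.
      by rewrite mulrA; apply: ler_piMl; [rewrite oppr_ge0 ltW | exact: dl1'].
    - by move=> ha; rewrite qE max_r ?mulr0 // oppr_le0.
    - by apply: mulr_ge0; [apply: mulr_ge0; exact: ltW | rewrite mxE ler0n].
    - rewrite mxE; case: (eqVneq k j) => [->|hkj] /=; first by right; rewrite mulr1.
      by left; rewrite mulr0.
  apply: (le_lt_trans (ler_sum _ (fun k _ => hk k))).
  rewrite !big_split /= !sumrN -!mulr_sumr.
  rewrite (_ : \sum_i0 q i0 0 = 1); last by case: hq.
  rewrite (_ : \sum_i0 y0 i0 0 = 1); last by case: hy0.
  rewrite (_ : \sum_i0 (delta_mx j 0 : 'cV[R]_n) i0 0 = 1); last exact: sum0_delta.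
  have : 0 < dl * e by rewrite mulr_gt0.
  lra.
pose G := Gf A v.
have hG : is_face (convA A) G := Gf_face hv.
have Gv : G v by split => //; exists 1 => //; rewrite subrr scaler0 addr0.
have GneC : G <> convA A.
  move=> HG; apply: (opt i hi); rewrite -/G HG.
  by exists (delta_mx i 0); [exact: simplex_delta | rewrite colE].
have hO : conv_outside A G (A *m p).
  exists p => //; split => // k Gk; apply/eqP; apply: contraT => pk; exfalso.
  apply: (opt k _ Gk); rewrite lt_neqAle dp0 andbT eq_sym.
  by apply: contra pk => /eqP h; rewrite mxE h mulr0.
have PhiN : facial_distance Nm A <= Nm (A *m p - A *m q).
  apply: (@le_trans _ _ (dist_set Nm G (conv_outside A G))).
    apply: ge_inf; last by exists G => //; split => //; split => //; exists v.
    exists 0 => _ [F _ <-]; apply: inf_ge0 => _ [a _ [b _ <-]]; exact: nrm_ge0.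
  apply: (@le_trans _ _ (Nm (A *m q - A *m p))); last by rewrite nrmB.
  apply: ge_inf; last by exists v => //; exists (A *m p).
  by exists 0 => _ [a _ [b _ <-]]; exact: nrm_ge0.
pose E := \big[Num.max/0]_(i0 < n) Nn (delta_mx i0 0).
have hEk k : Nn (delta_mx k 0) <= E.
  exact: (@le_bigmax _ _ _ 0 (fun k => Nn (delta_mx k 0 : 'cV[R]_n)) k).
have Ep : 0 < E.
  apply: lt_le_trans (hEk i); apply: nrm_gt0 => //.
  by apply/eqP => /matrixP /(_ i 0); rewrite !mxE !eqxx /= => /eqP; rewrite oner_eq0.
have sumabs : \sum_k `|d k 0| = 2 * s.
  under eq_bigr => k _ do rewrite mpp -dpE -dmE.
  by rewrite big_split /= -/(sum0 dp) -/(sum0 dm) sdm -/s; ring.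
have Nd : Nn d <= E * (2 * s).
  apply: le_trans (nrm_le_l1 d hNn) _.
  apply: (@le_trans _ _ (\sum_k `|d k 0| * E)).
    by apply: ler_sum => k _; apply: ler_wpM2l => //; exact: hEk.
  by rewrite -mulr_suml sumabs mulrC.
have DNd : dist_pt Nn x (Zset A u) <= E * (2 * s).
  exact: le_trans (dist_le hNn x zZ) Nd.
have NAxuE : Nm (A *m x - u) = s * Nm (A *m p - A *m q).
  by rewrite eAxu; case: (hNm) => _ hZ _; rewrite hZ ger0_norm // ltW.
rewrite NAxuE -/E; apply: final_ineq => //.
exact: nrm_ge0.
Qed.

End P2.


Unset Implicit Arguments.

Theorem proposition2 (R : realType) (m n : nat)
  (Nn : 'cV[R]_n -> R) (Nm : 'cV[R]_m -> R)
  (hNn : is_norm Nn) (hNm : is_norm Nm)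
  (A : 'M[R]_(m, n))
  (hA : exists i j : 'I_n, col i A != col j A) :
  (exists M : R,
     is_max [set Nm (A *m w) / Nn w |
              w in [set w : 'cV[R]_n | w != 0 /\ \sum_i w i 0 = 0]] M /\
     is_max [set Nm (A *m p.2 - p.1) / dist_pt Nn p.2 (Zset A p.1) |
              p in [set p : 'cV[R]_m * 'cV[R]_n |
                     convA A p.1 /\ simplex n p.2 /\ ~ Zset A p.1 p.2]] M) /\
  (forall (u : 'cV[R]_m) (x : 'cV[R]_n),
     convA A u -> simplex n x -> ~ Zset A u x ->
     facial_distance Nm A / \big[Num.max/0]_(i < n) Nn (delta_mx i 0)
       <= 2 * Nm (A *m x - u) / dist_pt Nn x (Zset A u)).
Proof.
have [ws [h0 h1 h2 h3]] := exists_max hNn hNm hA.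
split; first by exists (ratio Nn Nm A ws); exact: (part1 hNn hNm hA h0 h1 h2 h3).
move=> u x hu hx hnZ; exact: (part2 hNn hNm hA h3 hu hx hnZ).
Qed.
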